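(* Let $\Gamma=\langle V,(w_u)_{u\in V},\alpha,\beta\rangle$ be a celebrity game with $\beta>1$, $n=|V|$, $W=\sum_{u\in V}w_u$, $w_{\max}=\max_{u}w_u$, and suppose $\alpha\ge w_{\max}$. If there is more than one vertex $u\in V$ with $\alpha>W-w_u$, then the edgeless graph $I_n$ is the unique Nash equilibrium graph of $\Gamma$; otherwise a star graph $S_n$ on $V$ (a tree with one vertex adjacent to all others) is a Nash equilibrium graph of $\Gamma$.
   Context: A celebrity game $\Gamma=\langle V,(w_u)_{u\in V},\alpha,\beta\rangle$ consists of a set of players $V=\{1,\dots,n\}$, celebrity weights $w_u>0$, a link cost $\alpha>0$ and a critical distance $\beta$ with $1\le\beta\le n-1$. A strategy of player $u$ is a set $S_u\subseteq V\setminus\{u\}$; a strategy profile is $S=(S_1,\dots,S_n)$; its outcome graph $G[S]$ is the undirected graph on $V$ with edge set $\{\{u,v\}: u\in S_v\text{ or }v\in S_u\}$. With $d_G$ the graph distance (infinite between different connected components), the cost of player $u$ is $c_u(S)=\alpha|S_u|+\sum_{v:\,d_{G[S]}(u,v)>\beta}w_v$. $S$ is a Nash equilibrium if no player can strictly decrease its cost by changing only its own strategy; a graph $G$ is a Nash equilibrium graph of $\Gamma$ if $G=G[S]$ for some Nash equilibrium $S$. *)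

(* Defs.v *)
From HB Require Import structures.
From mathcomp Require Import all_boot all_order all_algebra.
Set Implicit Arguments. Unset Strict Implicit. Unset Printing Implicit Defensive.
Import Order.TTheory GRing.Theory Num.Theory.
Local Open Scope ring_scope.

(* Players are V = 'I_n.  A strategy profile assigns to each player u the set
   S u of players it buys links to. *)
Definition profile (n : nat) := 'I_n -> {set 'I_n}.

Definition valid_profile n (S : profile n) : Prop := forall u, u \notin S u.

Definition outcome n (S : profile n) : rel 'I_n :=
  fun u v => (u \in S v) || (v \in S u).

(* d_G(u,v) <= k : there is a walk of length at most k from u to v in G
   (distance is infinite between different components, so then this fails) *)
Definition dist_le n (G : rel 'I_n) (k : nat) (u v : 'I_n) : bool :=
  [exists m : 'I_k.+1, exists t : m.-tuple 'I_n,
     path G u t && (last u t == v)].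

Definition cost n (R : realFieldType) (w : 'I_n -> R) (alpha : R) (beta : nat)
  (S : profile n) (u : 'I_n) : R :=
  alpha * (#|S u|)%:R
  + \sum_(v : 'I_n | ~~ dist_le (outcome S) beta u v) w v.

Definition deviate n (S : profile n) (u : 'I_n) (T : {set 'I_n}) : profile n :=
  fun x => if x == u then T else S x.

Definition nash n (R : realFieldType) (w : 'I_n -> R) (alpha : R) (beta : nat)
  (S : profile n) : Prop :=
  valid_profile S /\
  forall (u : 'I_n) (T : {set 'I_n}), u \notin T ->
    cost w alpha beta S u <= cost w alpha beta (deviate S u T) u.

Definition nash_graph n (R : realFieldType) (w : 'I_n -> R) (alpha : R) (beta : nat)
  (G : rel 'I_n) : Prop :=
  exists S : profile n, nash w alpha beta S /\ forall u v, G u v = outcome S u v.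

Definition edgeless n : rel 'I_n := fun _ _ => false.

Definition star n (c : 'I_n) : rel 'I_n :=
  fun u v => ((u == c) && (v != c)) || ((v == c) && (u != c)).

(* Main.v *)
Require Import Defs.
From HB Require Import structures.
From mathcomp Require Import all_boot all_order all_algebra.
From mathcomp Require Import lra.
Import Order.TTheory GRing.Theory Num.Theory.
Local Open Scope ring_scope.

Lemma dist_leI n (G : rel 'I_n) k u v (s : seq 'I_n) :
  path G u s -> last u s = v -> (size s <= k)%N -> dist_le G k u v.
Proof.
move=> Hp Hl Hs; apply/existsP.
have Hs' : (size s < k.+1)%N by [].
exists (Ordinal Hs'); apply/existsP; exists (in_tuple s) => /=.
by rewrite Hp Hl eqxx.
Qed.

Lemma dist_leE n (G : rel 'I_n) k u v :
  dist_le G k u v -> exists s : seq 'I_n, path G u s /\ last u s = v.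
Proof.
move=> /existsP [m /existsP [t /andP [Hp /eqP Hl]]].
by exists (val t).
Qed.

Lemma dist_le_refl n (G : rel 'I_n) k u : dist_le G k u u.
Proof. exact: (@dist_leI n G k u u [::]). Qed.

Lemma path_last_inv n (G : rel 'I_n) (Q : 'I_n -> Prop) u s :
  (forall a b, G a b -> Q b) -> Q u -> path G u s -> Q (last u s).
Proof.
move=> HG; elim: s u => [|y s IH] u Hu //= /andP [Hy Hp].
exact: IH (HG _ _ Hy) Hp.
Qed.

Lemma path_iff_inv n (G : rel 'I_n) (P : 'I_n -> Prop) u s :
  (forall a b, G a b -> (P a <-> P b)) -> path G u s -> (P u <-> P (last u s)).
Proof.
move=> HG; elim: s u => [|y s IH] u //= /andP [Hy Hp].
have := HG _ _ Hy; have := IH _ Hp; tauto.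
Qed.

Lemma sum_le_pred n (R : realFieldType) (w : 'I_n -> R) (P Q : pred 'I_n) :
  (forall v, 0 <= w v) -> (forall v, P v -> Q v) ->
  \sum_(v | P v) w v <= \sum_(v | Q v) w v.
Proof.
move=> w0 PQ; rewrite [X in X <= _]big_mkcond [X in _ <= X]big_mkcond /=.
apply: ler_sum => v _; case: (boolP (P v)) => Pv.
  by rewrite (PQ _ Pv).
by case: (Q v) => //; exact: w0.
Qed.

Lemma sum_but n (R : realFieldType) (w : 'I_n -> R) x :
  \sum_(v : 'I_n) w v - w x = \sum_(v | v != x) w v.
Proof. by rewrite (bigD1 x) //= addrC addrK. Qed.

Lemma far_le n (R : realFieldType) (w : 'I_n -> R) (G : rel 'I_n) k x :
  (forall v, 0 <= w v) ->
  \sum_(v | ~~ dist_le G k x v) w v <= \sum_(v : 'I_n) w v - w x.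
Proof.
move=> w0; rewrite sum_but; apply: sum_le_pred => // v.
by apply: contra => /eqP ->; exact: dist_le_refl.
Qed.

Lemma nash_bound n (R : realFieldType) (w : 'I_n -> R) alpha beta S x :
  (forall v, 0 <= w v) -> nash w alpha beta S ->
  alpha * (#|S x|)%:R + \sum_(v | ~~ dist_le (outcome S) beta x v) w v
    <= \sum_(v : 'I_n) w v - w x.
Proof.
move=> w0 [_ H]; have := H x set0 (negbT (in_set0 x)).
rewrite /cost /deviate eqxx cards0 mulr0 add0r => H1.
apply: (le_trans H1); exact: far_le.
Qed.

Lemma uniqA n (R : realFieldType) (w : 'I_n -> R) alpha beta S u1 u2 :
  (forall u, 0 < w u) -> 0 < alpha -> (forall u, w u <= alpha) ->
  \sum_(v : 'I_n) w v - w u1 < alpha -> \sum_(v : 'I_n) w v - w u2 < alpha ->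
  u1 != u2 -> nash w alpha beta S -> forall x, S x = set0.
Proof.
move=> wpos apos wal h1 h2 u12 HN.
have w0 : forall v, 0 <= w v by move=> v; exact: ltW.
set W := \sum_(v : 'I_n) w v in h1 h2.
have far0 : forall x, 0 <= \sum_(v | ~~ dist_le (outcome S) beta x v) w v.
  by move=> x; apply: sumr_ge0.
have B := fun x => @nash_bound _ _ w alpha beta S x w0 HN.
have spec0 : forall u, W - w u < alpha -> S u = set0.
  move=> u hu; apply/eqP; apply: contraT; rewrite -card_gt0 => k1.
  have := B u; have := far0 u; rewrite -/W.
  have : 1 <= (#|S u|)%:R :> R by rewrite ler1n.
  move: (#|S u|)%:R => k; nra.
have le1 : forall x, (#|S x| <= 1)%N.
  move=> x; rewrite leqNgt; apply/negP => k2.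
  have [u [hu ux]] : exists u, W - w u < alpha /\ u != x.
    case: (eqVneq u1 x) => [e|ne]; last by exists u1.
    by exists u2; split => //; rewrite -e eq_sym.
  have := B x; have := far0 x; rewrite -/W.
  have : 2 <= (#|S x|)%:R :> R by rewrite (ler_nat R 2).
  have := wal u; have := wpos x.
  move: (#|S x|)%:R => k; nra.
move=> x; apply/eqP; apply: contraT => Sx.
have k1 : #|S x| = 1%N.
  by apply/eqP; rewrite eqn_leq le1 /= card_gt0.
have close : forall u, W - w u < alpha -> dist_le (outcome S) beta x u.
  move=> u hu; apply: contraT => nd.
  have := B x; rewrite k1 -/W.
  rewrite (bigD1 u) //=.
  have : 0 <= \sum_(v | ~~ dist_le (outcome S) beta x v && (v != u)) w v.
    by apply: sumr_ge0 => v _.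
  have := wpos x; lra.
pose g a := odflt a [pick y in S a].
have g0 : forall a, S a = set0 -> g a = a.
  by move=> a Sa; rewrite /g; case: pickP => //= y; rewrite Sa in_set0.
have gin : forall a b, b \in S a -> g a = b.
  move=> a b hb; rewrite /g; case: pickP => [y hy /=|H]; last by rewrite H in hb.
  apply/eqP; apply: contraT => yb.
  have : (1 < #|S a|)%N by apply/card_gt1P; exists y, b.
  by rewrite ltnNge le1.
pose P a := exists k, iter k g a = u1.
have gu1 : g u1 = u1 by apply: g0; apply: spec0.
have gu2 : g u2 = u2 by apply: g0; apply: spec0.
have hg : forall a, P (g a) <-> P a.
  move=> a; split => [[k hk]|[k hk]].
    by exists k.+1; rewrite iterSr.
  by exists k; rewrite -iterSr iterS hk gu1.
have hedge : forall a b, outcome S a b -> (P a <-> P b).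
  move=> a b /orP [h|h].
    by rewrite -(gin _ _ h); have := hg b; tauto.
  by rewrite -(gin _ _ h); have := hg a; tauto.
have [s1 [p1 l1]] := @dist_leE _ _ _ _ _ (close _ h1).
have [s2 [p2 l2]] := @dist_leE _ _ _ _ _ (close _ h2).
have e1 := @path_iff_inv _ _ P _ _ hedge p1.
have e2 := @path_iff_inv _ _ P _ _ hedge p2.
rewrite l1 in e1; rewrite l2 in e2.
have : P u2 by apply/e2/e1; exists 0%N.
case=> k; elim: k => [|k IH] /=; first by move/eqP; rewrite eq_sym (negbTE u12).
by rewrite -iterS iterSr gu2.
Qed.

Lemma edgelessNE n (R : realFieldType) (w : 'I_n -> R) alpha beta :
  (forall u, 0 < w u) -> (forall u, w u <= alpha) ->
  nash_graph w alpha beta (@edgeless n).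
Proof.
move=> wpos wal.
have w0 : forall v, 0 <= w v by move=> v; exact: ltW.
exists (fun _ => set0); split; last by move=> u v; rewrite /outcome !in_set0.
split; first by move=> u; rewrite in_set0.
move=> u T uT; rewrite /cost cards0 mulr0 add0r.
apply: le_trans; first exact: far_le.
rewrite sum_but.
have -> : deviate (fun _ => set0) u T u = T by rewrite /deviate; case: eqP.
have hd : forall v, dist_le (outcome (deviate (fun _ => set0) u T)) beta u v
   -> (v == u) || (v \in T).
  move=> v /dist_leE [s [p l]]; rewrite -l.
  apply: (@path_last_inv _ _ (fun b => (b == u) || (b \in T))) p; last by rewrite eqxx.
  move=> a b; rewrite /outcome /deviate; case: (eqVneq b u) => [->|bu]; first by rewrite ?eqxx.
  rewrite in_set0 /=; case: (eqVneq a u) => // _; by rewrite in_set0.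
rewrite [X in X <= _]big_mkcond [X in _ <= _ + X]big_mkcond /=.
have -> : alpha * (#|T|)%:R = \sum_(v : 'I_n) (if v \in T then alpha else 0).
  by rewrite -big_mkcond sumr_const mulr_natr.
rewrite -big_split /=; apply: ler_sum => v _.
case: (eqVneq v u) => [_|vu] /=.
  apply: addr_ge0; first by case: (v \in T) => //; apply: le_trans (wal v); exact: w0.
  by case: ifP => _ //; apply: w0.
case: (boolP (v \in T)) => vT.
  apply: (le_trans (wal v)); rewrite lerDl; case: ifP => _ //; exact: w0.
have -> : ~~ dist_le (outcome (deviate (fun _ => set0) u T)) beta u v.
  by apply/negP => /hd; rewrite (negbTE vu) (negbTE vT).
by rewrite add0r.
Qed.

Lemma starNE n (R : realFieldType) (w : 'I_n -> R) alpha beta (c : 'I_n) :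
  (forall u, 0 < w u) -> 0 < alpha -> (1 < beta)%N ->
  (forall x, x != c -> alpha <= \sum_(v : 'I_n) w v - w x) ->
  nash_graph w alpha beta (star c).
Proof.
move=> wpos apos b2 Hc.
have w0 : forall v, 0 <= w v by move=> v; exact: ltW.
pose Sp : profile n := fun x => if x == c then set0 else [set c].
have Sin : forall a b, (a \in Sp b) = (a == c) && (b != c).
  move=> a b; rewrite /Sp; case: (eqVneq b c) => _ /=; rewrite ?in_set0 ?in_set1 ?andbF ?andbT //.
apply: (ex_intro _ Sp); split; last first.
  by move=> a b; rewrite /outcome /star !Sin orbC.
have cost_ge0 : forall Sp' u, 0 <= cost w alpha beta Sp' u.
  move=> Sp' u; apply: addr_ge0; last by apply: sumr_ge0.
  by apply: mulr_ge0; [exact: ltW | exact: ler0n].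
split; first by move=> u; rewrite Sin; case: (eqVneq u c).
have close : forall u v, dist_le (outcome Sp) beta u v.
  move=> u v; case: (eqVneq v u) => [->|vu]; first exact: dist_le_refl.
  case: (eqVneq v c) => [vc|vc]; case: (eqVneq u c) => [uc|uc].
  - by rewrite vc uc eqxx in vu.
  - apply: (@dist_leI _ _ _ _ _ [:: v]) => //=; last exact: ltnW.
    by rewrite /outcome !Sin ?vc ?uc ?eqxx ?andbT ?orbT ?andTb ?orbF /= ?uc ?vc.
  - apply: (@dist_leI _ _ _ _ _ [:: v]) => //=; last exact: ltnW.
    by rewrite /outcome !Sin ?vc ?uc ?eqxx ?andbT ?orbT ?andTb ?orbF /= ?uc ?vc.
  - apply: (@dist_leI _ _ _ _ _ [:: c; v]) => //=.
    by rewrite /outcome !Sin ?vc ?uc ?eqxx ?andbT ?orbT ?andTb ?orbF /= ?uc ?vc.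
move=> u T uT.
have farS : \sum_(v | ~~ dist_le (outcome Sp) beta u v) w v = 0.
  by rewrite big_pred0 // => v; rewrite close.
rewrite {1}/cost farS addr0.
case: (eqVneq u c) => [uc|uc].
  by rewrite /Sp uc eqxx cards0 mulr0.
rewrite /Sp (negbTE uc) cards1 mulr1.
case: (eqVneq T set0) => [T0|Tn].
  rewrite /cost /deviate eqxx T0 cards0 mulr0 add0r.
  apply: (le_trans (Hc _ uc)); rewrite sum_but; apply: sum_le_pred => // v vu.
  apply/negP => /dist_leE [[|y s] [p l]].
    by rewrite -l eqxx in vu.
  move: p => /= /andP [+ _]; rewrite /outcome /deviate eqxx in_set0 orbF.
  case: (eqVneq y u) => _; first by rewrite in_set0.
  case: (eqVneq y c) => _; first by rewrite in_set0.
  by rewrite in_set1 (negbTE uc).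
rewrite /cost.
have -> : deviate Sp u T u = T by rewrite /deviate; case: eqP.
have : 1 <= (#|T|)%:R :> R by rewrite ler1n card_gt0.
have : 0 <= \sum_(v | ~~ dist_le (outcome (deviate Sp u T)) beta u v) w v.
  by apply: sumr_ge0.
move: (#|T|)%:R => k; nra.
Qed.

Theorem proposition5 (n : nat) (R : realFieldType) (w : 'I_n -> R) (alpha : R)
    (beta : nat) :
  (forall u, 0 < w u) -> 0 < alpha ->
  (1 <= beta)%N -> (beta <= n - 1)%N ->
  (1 < beta)%N ->
  (forall u, w u <= alpha) ->
  let W := \sum_(u : 'I_n) w u in
  if leq 2 #|[set u : 'I_n | W - w u < alpha]| then
    nash_graph w alpha beta (@edgeless n) /\
    (forall G : rel 'I_n, nash_graph w alpha beta G ->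
       forall u v, G u v = edgeless u v)
  else
    exists c : 'I_n, nash_graph w alpha beta (star c).
Proof.
move=> wpos apos b1 bn b2 wal W.
case: ifP => Hspec.
  split; first exact: edgelessNE.
  move: Hspec => /card_gt1P [u1 [u2 [h1 h2 u12]]].
  rewrite !inE in h1 h2.
  move=> G [S [HN HG]] u v; rewrite HG /outcome.
  by rewrite !(@uniqA _ _ _ _ _ _ _ _ wpos apos wal h1 h2 u12 HN) !in_set0.
have [c Hc] : exists c : 'I_n, forall x, x != c -> alpha <= W - w x.
  case: (pickP [pred u | W - w u < alpha]) => [c hc | Hnone].
    exists c => x xc; rewrite leNgt; apply/negP => hx.
    move: Hspec => /negP; apply; apply/card_gt1P; exists x, c.
    by rewrite !inE hx; move: hc => /= ->.
  have n0 : (0 < n)%N.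
    rewrite lt0n; apply/eqP => n0; move: bn; rewrite n0 /=.
    by rewrite leqn0 => /eqP b0; rewrite b0 in b1.
  exists (Ordinal n0) => x _; rewrite leNgt; apply/negP => hx.
  by have := Hnone x; rewrite /= hx.
exists c; exact: (@starNE _ _ _ _ _ c wpos apos b2 Hc).
Qed.
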